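(* If $t\neq\pm2$ and $n$ are integers, then $h(t)=\left|\coprod_{j=0}^{11}X_{t,n+j}\right|$, where $h(t)$ is the number of equivalence classes of integral binary quadratic forms of discriminant $t^2-4$.
   Context: An integral binary quadratic form is $ax^2+bxy+cy^2$ with $a,b,c\in\mathbb{Z}$, of discriminant $b^2-4ac$; two forms are equivalent if they lie in the same orbit of the $\mathrm{SL}_2(\mathbb{Z})$-action $\left(\begin{bmatrix}\alpha&\beta\\ \gamma&\delta\end{bmatrix}\cdot f\right)(x,y)=f(\alpha x+\beta y,\gamma x+\delta y)$. $B_3=\langle\sigma_1,\sigma_2:\sigma_1\sigma_2\sigma_1=\sigma_2\sigma_1\sigma_2\rangle$; $\phi:B_3\to\mathrm{SL}_2(\mathbb{Z})$ is given by $\phi(\sigma_1)=\begin{bmatrix}1&1\\0&1\end{bmatrix}$, $\phi(\sigma_2)=\begin{bmatrix}1&0\\-1&1\end{bmatrix}$; $\epsilon:B_3\to\mathbb{Z}$ is the exponent sum. $X_{t,n}$ is the set of conjugacy classes of $g\in B_3$ with $\mathrm{tr}(\phi(g))=t$ and $\epsilon(g)=n$. *)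

(* Defs.v *)
From mathcomp Require Import all_boot all_order all_algebra.
Set Implicit Arguments. Unset Strict Implicit. Unset Printing Implicit Defensive.
Import Order.TTheory GRing.Theory Num.Theory.
Local Open Scope ring_scope.

(** ** Integral binary quadratic forms  a x^2 + b x y + c y^2 *)
Definition qform := (int * int * int)%type.
Definition qa (f : qform) : int := f.1.1.
Definition qb (f : qform) : int := f.1.2.
Definition qc (f : qform) : int := f.2.

Definition disc (f : qform) : int := qb f ^+ 2 - 4 * qa f * qc f.

(** ([[al be];[ga de]] . f)(x,y) = f(al x + be y, ga x + de y), coefficients *)
Definition qact (al be ga de : int) (f : qform) : qform :=
  let a := qa f in let b := qb f in let c := qc f in
  (a * al ^+ 2 + b * al * ga + c * ga ^+ 2,
   2 * a * al * be + b * (al * de + be * ga) + 2 * c * ga * de,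
   a * be ^+ 2 + b * be * de + c * de ^+ 2).

Definition form_equiv (f g : qform) : Prop :=
  exists al be ga de : int, al * de - be * ga = 1 /\ qact al be ga de f = g.

(** A letter (g, e): g = false is sigma_1, g = true is sigma_2;
    e = true means the inverse letter. *)
Definition letter := (bool * bool)%type.
Definition word := seq letter.

Definition s1 : letter := (false, false).
Definition s2 : letter := (true, false).

Definition linv (l : letter) : letter := (l.1, ~~ l.2).
Definition winv (w : word) : word := rev (map linv w).

Inductive braid_eq : word -> word -> Prop :=
| beq_refl w : braid_eq w w
| beq_sym u v : braid_eq u v -> braid_eq v u
| beq_trans u v w : braid_eq u v -> braid_eq v w -> braid_eq u w
| beq_ctx a b u v : braid_eq u v -> braid_eq (a ++ u ++ b) (a ++ v ++ b)
| beq_cancel l : braid_eq [:: l; linv l] [::]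
| beq_braid : braid_eq [:: s1; s2; s1] [:: s2; s1; s2].

Definition braid_conj (w w' : word) : Prop :=
  exists u : word, braid_eq (u ++ w ++ winv u) w'.

Definition mx2 (a b c d : int) : 'M[int]_2 :=
  \matrix_(i < 2, j < 2)
    if (i == 0 :> nat) then (if (j == 0 :> nat) then a else b)
    else (if (j == 0 :> nat) then c else d).

Definition phi_letter (l : letter) : 'M[int]_2 :=
  match l with
  | (false, false) => mx2 1 1 0 1
  | (false, true) => mx2 1 (-1) 0 1
  | (true, false) => mx2 1 0 (-1) 1
  | (true, true) => mx2 1 0 1 1
  end.

Definition phi (w : word) : 'M[int]_2 :=
  foldr (fun l M => phi_letter l *m M) 1%:M w.

Definition eps (w : word) : int :=
  \sum_(l <- w) (if l.2 then -1 else 1).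

(** elements whose conjugacy classes form X_{t,n} *)
Definition Xpred (t n : int) (w : word) : Prop :=
  \tr (phi w) = t /\ eps w = n.

Definition num_classes (T : Type) (P : T -> Prop) (R : T -> T -> Prop)
    (k : nat) : Prop :=
  exists f : 'I_k -> T,
    (forall i, P (f i)) /\
    (forall i j, R (f i) (f j) -> i = j) /\
    (forall x, P x -> exists i, R x (f i)).

(* Main.v *)
Require Import Defs.
From mathcomp Require Import all_boot all_order all_algebra.
Import GRing.Theory Num.Theory.
Local Open Scope ring_scope.
From mathcomp Require Import zify ring.
From Stdlib Require Import Setoid Morphisms Classical.
Set Warnings "-notation-overridden -ambiguous-paths".

Lemma mx2E a b c d (i j : 'I_2) : mx2 a b c d i j =
  if (i == 0 :> nat) then (if (j == 0 :> nat) then a else b)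
    else (if (j == 0 :> nat) then c else d).
Proof. by rewrite /mx2 mxE. Qed.

Lemma mx2_eta (M : 'M[int]_2) : M = mx2 (M 0 0) (M 0 1) (M 1 0) (M 1 1).
Proof.
apply/matrixP => i j; rewrite mx2E.
case: i => [[|[|i]] Hi] //; case: j => [[|[|j]] Hj] //=;
 by congr (M _ _); apply: val_inj.
Qed.

Lemma mx2_eq a b c d a' b' c' d' :
  mx2 a b c d = mx2 a' b' c' d' -> [/\ a = a', b = b', c = c' & d = d'].
Proof.
move=> H.
have E := fun i j => congr1 (fun M : 'M[int]_2 => M i j) H.
have := E 0 0; have := E 0 1; have := E 1 0; have := E 1 1.
by rewrite !mx2E /=.
Qed.

Lemma mx2_mul a b c d a' b' c' d' :
  mx2 a b c d *m mx2 a' b' c' d' =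
  mx2 (a*a'+b*c') (a*b'+b*d') (c*a'+d*c') (c*b'+d*d').
Proof.
apply/matrixP => i j; rewrite !mxE !big_ord_recl big_ord0 !mx2E /=.
case: i => [[|[|i]] Hi] //; case: j => [[|[|j]] Hj] //=; ring.
Qed.

Lemma mx2_1 : (1%:M : 'M[int]_2) = mx2 1 0 0 1.
Proof.
apply/matrixP => i j; rewrite !mxE.
case: i => [[|[|i]] Hi] //; case: j => [[|[|j]] Hj] //=; ring.
Qed.

Lemma mx2_scal (s : int) : (s%:M : 'M[int]_2) = mx2 s 0 0 s.
Proof.
apply/matrixP => i j; rewrite !mxE.
case: i => [[|[|i]] Hi] //; case: j => [[|[|j]] Hj] //=; ring.
Qed.

Lemma mx2_tr a b c d : \tr (mx2 a b c d) = a + d.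
Proof. by rewrite /mxtrace !big_ord_recl big_ord0 !mx2E /=; ring. Qed.

Lemma mx2_00 a b c d : mx2 a b c d 0 0 = a. Proof. by rewrite mx2E. Qed.
Lemma mx2_01 a b c d : mx2 a b c d 0 1 = b. Proof. by rewrite mx2E. Qed.
Lemma mx2_10 a b c d : mx2 a b c d 1 0 = c. Proof. by rewrite mx2E. Qed.
Lemma mx2_11 a b c d : mx2 a b c d 1 1 = d. Proof. by rewrite mx2E. Qed.

Lemma phi_nil : phi [::] = mx2 1 0 0 1.
Proof. exact: mx2_1. Qed.
Lemma phi_cons l w : phi (l :: w) = phi_letter l *m phi w.
Proof. by []. Qed.
Lemma phi_cat u v : phi (u ++ v) = phi u *m phi v.
Proof.
elim: u => [|l u IH] /=; first by rewrite mul1mx.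
by rewrite IH mulmxA.
Qed.

Add Parametric Relation : word braid_eq
  reflexivity proved by beq_refl
  symmetry proved by beq_sym
  transitivity proved by beq_trans as braid_rel.

Lemma beq_catl a u v : braid_eq u v -> braid_eq (a ++ u) (a ++ v).
Proof. by move=> H; have := beq_ctx a [::] H; rewrite !cats0. Qed.
Lemma beq_catr b u v : braid_eq u v -> braid_eq (u ++ b) (v ++ b).
Proof. by move=> H; exact: (beq_ctx [::] b H). Qed.

Add Parametric Morphism : (@cat letter) with signature
  braid_eq ==> braid_eq ==> braid_eq as cat_mor.
Proof.
move=> u u' Hu v v' Hv.
exact: (beq_trans (beq_catr v _ _ Hu) (beq_catl u' _ _ Hv)).
Qed.

Add Parametric Morphism (l : letter) : (cons l) with signature
  braid_eq ==> braid_eq as cons_mor.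
Proof. by move=> u v H; exact: (beq_catl [:: l] _ _ H). Qed.

Lemma linvK l : linv (linv l) = l.
Proof. by case: l => a []. Qed.

Lemma winvK w : winv (winv w) = w.
Proof. by rewrite /winv map_rev revK -map_comp (eq_map linvK) map_id. Qed.

Lemma winv_cat u v : winv (u ++ v) = winv v ++ winv u.
Proof. by rewrite /winv map_cat rev_cat. Qed.

Lemma winv_cons l w : winv (l :: w) = winv w ++ [:: linv l].
Proof. by rewrite /winv /= rev_cons cats1. Qed.

Lemma beq_invr u : braid_eq (u ++ winv u) [::].
Proof.
elim: u => [|l u IH]; first exact: beq_refl.
rewrite winv_cons catA.
have -> : (l :: u) ++ winv u = [:: l] ++ (u ++ winv u) by [].
rewrite IH /=. exact: beq_cancel.
Qed.

Lemma beq_invl u : braid_eq (winv u ++ u) [::].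
Proof. by have := beq_invr (winv u); rewrite winvK. Qed.

Lemma eps_nil : eps [::] = 0. Proof. by rewrite /eps big_nil. Qed.
Lemma eps_cons l w : eps (l :: w) = (if l.2 then -1 else 1) + eps w.
Proof. by rewrite /eps big_cons. Qed.
Lemma eps_cat u v : eps (u ++ v) = eps u + eps v.
Proof. by rewrite /eps big_cat. Qed.
Lemma eps_winv u : eps (winv u) = - eps u.
Proof.
elim: u => [|l u IH]; first by rewrite /winv /= eps_nil oppr0.
rewrite winv_cons eps_cat IH eps_cons eps_cons eps_nil.
by case: l => a []/=; ring.
Qed.

Lemma phi_letter_inv l : phi_letter l *m phi_letter (linv l) = 1%:M.
Proof. by rewrite mx2_1; case: l => [[] []] /=; rewrite mx2_mul; congr mx2; ring. Qed.

Lemma braid_inv u v : braid_eq u v -> phi u = phi v /\ eps u = eps v.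
Proof.
elim => {u v}.
- by [].
- by move=> u v _ [-> ->].
- by move=> u v w _ [-> ->] _ [-> ->].
- move=> a b u v _ [H1 H2]; by rewrite !phi_cat !eps_cat H1 H2.
- move=> l; split; last by rewrite !eps_cons eps_nil; case: l => a [] /=; ring.
  by rewrite /= mulmx1 phi_letter_inv.
- split; last by rewrite !eps_cons eps_nil.
  by rewrite /= !mulmx1 !mx2_mul; congr mx2; ring.
Qed.

Lemma phi_winv u : phi (winv u) *m phi u = 1%:M.
Proof. by have [H _] := braid_inv _ _ (beq_invl u); rewrite -phi_cat H. Qed.
Lemma phi_winv' u : phi u *m phi (winv u) = 1%:M.
Proof. by have [H _] := braid_inv _ _ (beq_invr u); rewrite -phi_cat H. Qed.

#[local] Hint Resolve beq_refl : core.
Definition s1' : letter := (false, true).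
Definition s2' : letter := (true, true).
Definition X : word := [:: s1; s2; s1].
Definition Y : word := [:: s1; s2].
Definition Z : word := X ++ X.
Definition Z4 : word := Z ++ Z.
Definition ypow (e : bool) : word := if e then Y ++ Y else Y.
Definition y0w (o : option bool) : word :=
  match o with None => [::] | Some e => ypow e end.
Definition blockw (bl : seq bool) : word := flatten [seq X ++ ypow e | e <- bl].
Definition body o bl (f : bool) : word :=
  y0w o ++ blockw bl ++ (if f then X else [::]).
Definition z4pow (m : int) : word :=
  match m with
  | Posz k => flatten (nseq k Z4)
  | Negz k => flatten (nseq k.+1 (winv Z4))
  end.
Definition zp m (p : bool) : word := z4pow m ++ (if p then Z else [::]).
Definition nf m p o bl f : word := zp m p ++ body o bl f.

Lemma st_br a b w : braid_eq (a ++ [:: s2; s1; s2] ++ b) w ->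
  braid_eq (a ++ [:: s1; s2; s1] ++ b) w.
Proof. by apply: beq_trans; apply: beq_ctx; apply: beq_braid. Qed.
Lemma st_br' a b w : braid_eq (a ++ [:: s1; s2; s1] ++ b) w ->
  braid_eq (a ++ [:: s2; s1; s2] ++ b) w.
Proof. by apply: beq_trans; apply: beq_ctx; apply: beq_sym; apply: beq_braid. Qed.
Lemma st_can a b l w : braid_eq (a ++ b) w ->
  braid_eq (a ++ [:: l; linv l] ++ b) w.
Proof.
move=> H; apply: beq_trans H.
have := beq_ctx a b (beq_cancel l); by [].
Qed.

Lemma Z_s1 : braid_eq (Z ++ [:: s1]) ([:: s1] ++ Z).
Proof.
apply: (st_br [:: s1; s2; s1] [:: s1]).
apply: (st_br' [:: s1] [:: s1; s2; s1]). exact: beq_refl.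
Qed.
Lemma Z_s2 : braid_eq (Z ++ [:: s2]) ([:: s2] ++ Z).
Proof.
apply: (st_br [::] [:: s1; s2; s1; s2]).
apply: (st_br' [:: s2; s1; s2; s1] [::]). exact: beq_refl.
Qed.
Lemma XX_YYY : braid_eq (X ++ X) (Y ++ Y ++ Y).
Proof. apply: (st_br [:: s1; s2; s1] [::]). exact: beq_refl. Qed.

Definition Pl (l : letter) : word :=
  match l with
  | (false, false) => Y ++ Y ++ X
  | (false, true) => X ++ Y
  | (true, false) => X ++ Y ++ Y
  | (true, true) => Y ++ X
  end.

Lemma Z_l l : braid_eq (Z ++ [:: l]) (Pl l).
Proof.
case: l => [[] []] /=.
- apply: (st_br [:: s1; s2; s1] [:: s2']).
  apply: (st_can [:: s1; s2; s1; s2; s1] [::] s2). exact: beq_refl.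
- exact: beq_refl.
- apply: (st_can [:: s1; s2; s1; s1; s2] [::] s1). exact: beq_refl.
- apply: (st_br [:: s1; s2; s1] [:: s1]). exact: beq_refl.
Qed.

Lemma l_Pl l : braid_eq [:: l] (winv Z ++ Pl l).
Proof.
rewrite -Z_l catA.
have -> : [:: l] = [::] ++ [:: l] by [].
apply: beq_catr; apply: beq_sym; exact: beq_invl.
Qed.

Definition central w := forall v, braid_eq (w ++ v) (v ++ w).

Lemma central_Z : central Z.
Proof.
have hl : forall l, braid_eq (Z ++ [:: l]) ([:: l] ++ Z).
  have hpos : forall l, ~~ l.2 -> braid_eq (Z ++ [:: l]) ([:: l] ++ Z).
    by case=> [[] []] //= _; [exact: Z_s2 | exact: Z_s1].
  move=> [g e]; case: e; last exact: hpos.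
  set l := (g, true). set l0 := linv l.
  have El : l = linv l0 by rewrite /l0 linvK.
  have h0 := hpos l0 (erefl _).
  have c1 : braid_eq ([:: l0] ++ [:: l]) [::].
    rewrite El; exact: beq_cancel.
  have c2 : braid_eq ([:: l] ++ [:: l0]) [::] by exact: beq_cancel.
  symmetry.
  transitivity ([:: l] ++ (Z ++ ([:: l0] ++ [:: l]))).
    rewrite c1 cats0; reflexivity.
  rewrite (catA Z).
  rewrite h0.
  rewrite -(catA [:: l0] Z).
  rewrite (catA [:: l]).
  rewrite c2.
  reflexivity.
elim=> [|l v IH]; first by rewrite cats0.
have -> : l :: v = [:: l] ++ v by [].
by rewrite catA hl -catA IH catA.
Qed.

Lemma central_cat u v : central u -> central v -> central (u ++ v).
Proof. by move=> Hu Hv w; rewrite -catA Hv catA Hu catA. Qed.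

Lemma central_winv u : central u -> central (winv u).
Proof.
move=> Hu w.
transitivity (winv u ++ w ++ u ++ winv u).
  by rewrite (beq_invr u) cats0.
rewrite (catA w u) -(Hu w) -(catA u w) (catA (winv u) u) (beq_invl u).
reflexivity.
Qed.

Lemma central_nil : central [::].
Proof. by move=> v; rewrite cats0. Qed.

Lemma central_flat k u : central u -> central (flatten (nseq k u)).
Proof.
move=> Hu; elim: k => [|k IH] /=; first exact: central_nil.
exact: central_cat.
Qed.

Lemma central_Z4 : central Z4.
Proof. exact: central_cat central_Z central_Z. Qed.

Lemma central_z4pow m : central (z4pow m).
Proof.
case: m => k; apply: central_flat; last apply: central_winv;
  exact: central_Z4.
Qed.

Lemma central_zp m p : central (zp m p).
Proof.
apply: central_cat; first exact: central_z4pow.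
case: p; [exact: central_Z | exact: central_nil].
Qed.

Lemma z4_succ m : exists m', braid_eq (Z4 ++ z4pow m) (z4pow m').
Proof.
case: m => [k|[|k]].
- by exists (Posz k.+1).
- exists 0; have -> : z4pow (Negz 0) = winv Z4 ++ [::] by [].
  by rewrite cats0 (beq_invr Z4).
- exists (Negz k); have -> : z4pow (Negz k.+1) = winv Z4 ++ z4pow (Negz k) by [].
  by rewrite catA (beq_invr Z4).
Qed.

Lemma z4_pred m : exists m', braid_eq (winv Z4 ++ z4pow m) (z4pow m').
Proof.
case: m => [[|k]|k].
- exists (Negz 0); have -> : z4pow (Negz 0) = winv Z4 ++ [::] by [].
  by [].
- exists (Posz k); have -> : z4pow (Posz k.+1) = Z4 ++ z4pow (Posz k) by [].
  by rewrite catA (beq_invl Z4).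
- by exists (Negz k.+1).
Qed.

Lemma winvZ4 : winv Z4 = winv Z ++ winv Z.
Proof. by rewrite /Z4 winv_cat. Qed.

Lemma Z_zp m p : exists m' p', braid_eq (Z ++ zp m p) (zp m' p').
Proof.
case: p; rewrite /zp.
- have [m' Hm] := z4_succ m.
  exists m', false; rewrite cats0 -Hm catA (central_Z (z4pow m)) -catA.
  rewrite (central_Z4 (z4pow m)); reflexivity.
- exists m, true; rewrite cats0; exact: central_Z.
Qed.

Lemma Zinv_zp m p : exists m' p', braid_eq (winv Z ++ zp m p) (zp m' p').
Proof.
case: p; rewrite /zp.
- exists m, false; rewrite cats0 catA (central_winv Z central_Z (z4pow m)) -catA.
  by rewrite (beq_invl Z) cats0.
- have [m' Hm] := z4_pred m.
  exists m', true; rewrite cats0 -Hm.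
  transitivity (winv Z ++ (winv Z ++ Z) ++ z4pow m).
    by rewrite (beq_invl Z).
  rewrite winvZ4 -!catA (catA X X) -/Z (central_Z (z4pow m)); reflexivity.
Qed.

Definition isnf v := exists m p o bl f, braid_eq v (nf m p o bl f).

Lemma isnf_eq u v : braid_eq u v -> isnf v -> isnf u.
Proof.
move=> H [m [p [o [bl [f Hv]]]]]; exists m, p, o, bl, f.
exact: beq_trans H Hv.
Qed.

Lemma isnf_Z v : isnf v -> isnf (Z ++ v).
Proof.
move=> [m [p [o [bl [f Hv]]]]].
have [m' [p' H]] := Z_zp m p.
exists m', p', o, bl, f; rewrite Hv /nf catA H; reflexivity.
Qed.

Lemma isnf_Zinv v : isnf v -> isnf (winv Z ++ v).
Proof.
move=> [m [p [o [bl [f Hv]]]]].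
have [m' [p' H]] := Zinv_zp m p.
exists m', p', o, bl, f; rewrite Hv /nf catA H; reflexivity.
Qed.

Lemma isnf_X v : isnf v -> isnf (X ++ v).
Proof.
move=> [m [p [o [bl [f Hv]]]]].
apply: (@isnf_eq _ (zp m p ++ (X ++ body o bl f))).
  by rewrite Hv /nf !catA (central_zp m p X).
clear Hv.
case: o => [e|].
  exists m, p, None, (e :: bl), f; rewrite /body /blockw /= !catA; reflexivity.
case: bl => [|e bl].
  case: f.
    apply: (@isnf_eq _ (Z ++ zp m p)).
      by rewrite -(central_zp m p Z); exact: beq_refl.
    apply: isnf_Z; exists m, p, None, [::], false.
    rewrite /nf; have -> : body None [::] false = [::] by [].
    by rewrite cats0.
  exists m, p, None, [::], true; rewrite /nf /body /=; reflexivity.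
apply: (@isnf_eq _ (Z ++ (zp m p ++ body (Some e) bl f))).
  have -> : X ++ body None (e :: bl) f = Z ++ body (Some e) bl f.
    by rewrite /body /blockw /= -!catA.
  by rewrite (catA Z) -(central_zp m p Z) -catA.
apply: isnf_Z; exists m, p, (Some e), bl, f; reflexivity.
Qed.

Lemma isnf_Y v : isnf v -> isnf (Y ++ v).
Proof.
move=> [m [p [o [bl [f Hv]]]]].
apply: (@isnf_eq _ (zp m p ++ (Y ++ body o bl f))).
  by rewrite Hv /nf !catA (central_zp m p Y).
clear Hv.
case: o => [[]|].
- apply: (@isnf_eq _ (Z ++ (zp m p ++ body None bl f))).
    have -> : Y ++ body (Some true) bl f = (Y ++ Y ++ Y) ++ body None bl f by [].
    rewrite -XX_YYY (catA Z) -(central_zp m p Z) -(catA (zp m p) Z); exact: beq_refl.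
  apply: isnf_Z; exists m, p, None, bl, f; reflexivity.
- by exists m, p, (Some true), bl, f.
- by exists m, p, (Some false), bl, f.
Qed.

Lemma nf_exists w : isnf w.
Proof.
elim: w => [|l w IH].
  exists 0, false, None, [::], false; rewrite /nf /zp /body /=; reflexivity.
apply: (@isnf_eq _ (winv Z ++ Pl l ++ w)).
  have -> : l :: w = [:: l] ++ w by [].
  by rewrite catA -l_Pl.
apply: isnf_Zinv.
case: l => [[] []]; rewrite /Pl -?catA.
- by apply: isnf_Y; apply: isnf_X.
- by apply: isnf_X; apply: isnf_Y; apply: isnf_Y.
- by apply: isnf_X; apply: isnf_Y.
- by apply: isnf_Y; apply: isnf_Y; apply: isnf_X.
Qed.

#[local] Hint Resolve beq_refl : core.

Definition Ro (o : option bool) : 'M[int]_2 :=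
  match o with
  | None => mx2 1 0 0 1
  | Some false => mx2 0 1 (-1) 1
  | Some true => mx2 (-1) 1 (-1) 0
  end.
Definition Sf (f : bool) : 'M[int]_2 := if f then mx2 0 1 (-1) 0 else mx2 1 0 0 1.
Definition Gm (e : bool) : 'M[int]_2 := if e then mx2 1 0 (-1) 1 else mx2 1 (-1) 0 1.
Definition Nbl (bl : seq bool) : 'M[int]_2 := foldr (fun e M => Gm e *m M) (mx2 1 0 0 1) bl.

Lemma phi_X : phi X = mx2 0 1 (-1) 0.
Proof. by rewrite !phi_cons phi_nil /= !mx2_mul; congr mx2; ring. Qed.
Lemma phi_Y : phi Y = mx2 0 1 (-1) 1.
Proof. by rewrite !phi_cons phi_nil /= !mx2_mul; congr mx2; ring. Qed.
Lemma phi_Z : phi Z = mx2 (-1) 0 0 (-1).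
Proof. by rewrite phi_cat phi_X mx2_mul; congr mx2; ring. Qed.
Lemma phi_Z4 : phi Z4 = mx2 1 0 0 1.
Proof. by rewrite phi_cat phi_Z mx2_mul; congr mx2; ring. Qed.
Lemma phi_Z4inv : phi (winv Z4) = mx2 1 0 0 1.
Proof. by have := phi_winv Z4; rewrite phi_Z4 -mx2_1 mulmx1. Qed.
Lemma eps_X : eps X = 3. Proof. by rewrite !eps_cons eps_nil. Qed.
Lemma eps_Z : eps Z = 6. Proof. by rewrite eps_cat eps_X. Qed.
Lemma eps_Z4 : eps Z4 = 12. Proof. by rewrite eps_cat eps_Z. Qed.

Lemma phi_flat k u : phi u = mx2 1 0 0 1 -> phi (flatten (nseq k u)) = mx2 1 0 0 1.
Proof.
move=> H; elim: k => [|k IH] /=; first exact: phi_nil.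
by rewrite phi_cat IH H -mx2_1 mulmx1.
Qed.
Lemma eps_flat k u : eps (flatten (nseq k u)) = k%:Z * eps u.
Proof.
elim: k => [|k IH] /=; first by rewrite eps_nil mul0r.
by rewrite eps_cat IH -addn1 PoszD mulrDl mul1r addrC.
Qed.

Lemma phi_z4pow m : phi (z4pow m) = mx2 1 0 0 1.
Proof. by case: m => k; apply: phi_flat; [exact: phi_Z4 | exact: phi_Z4inv]. Qed.
Lemma eps_z4pow m : eps (z4pow m) = 12 * m.
Proof.
case: m => k; rewrite /z4pow eps_flat; first by rewrite eps_Z4 mulrC.
rewrite eps_winv eps_Z4 NegzE; lia.
Qed.

Lemma phi_zp m p : phi (zp m p) = (if p then -1 else 1)%:M.
Proof.
rewrite /zp phi_cat phi_z4pow mx2_scal; case: p.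
  by rewrite phi_Z mx2_mul; congr mx2; ring.
by rewrite phi_nil mx2_mul; congr mx2; ring.
Qed.
Lemma eps_zp m p : eps (zp m p) = 12 * m + (if p then 6 else 0).
Proof. by rewrite /zp eps_cat eps_z4pow; case: p; rewrite ?eps_Z ?eps_nil. Qed.

Lemma phi_y0w o : phi (y0w o) = Ro o.
Proof.
case: o => [[]|]; last exact: phi_nil.
  by rewrite /y0w /ypow phi_cat phi_Y mx2_mul; congr mx2; ring.
exact: phi_Y.
Qed.
Lemma phi_fx f : phi (if f then X else [::]) = Sf f.
Proof. by case: f; [exact: phi_X | exact: phi_nil]. Qed.

Lemma Nbl_pat bl : exists a b c d, 0 <= a /\ 0 <= b /\ 0 <= c /\ 0 <= d /\
  a * d - b * c = 1 /\ Nbl bl = mx2 a (- b) (- c) d.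
Proof.
elim: bl => [|e bl [a [b [c [d [ha [hb [hc [hd [hdet HN]]]]]]]]]].
  by exists 1, 0, 0, 1; do !split => //; rewrite oppr0.
case: e; rewrite /= HN mx2_mul.
  exists a, b, (a + c), (b + d); do !split; try lia.
  by congr mx2; ring.
exists (a + c), (b + d), c, d; do !split; try lia.
by congr mx2; ring.
Qed.

Lemma scal_comm (s : int) (A B : 'M[int]_2) : A *m (s%:M *m B) = s%:M *m (A *m B).
Proof. by rewrite mulmxA (scalar_mxC s A) -mulmxA. Qed.
Lemma scal_scal (s t : int) (A : 'M[int]_2) : s%:M *m (t%:M *m A) = (s * t)%:M *m A.
Proof. by rewrite mulmxA -scalar_mxM. Qed.

Lemma phi_blk e : phi (X ++ ypow e) = (-1)%:M *m Gm e.
Proof.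
rewrite phi_cat phi_X mx2_scal; case: e; rewrite /ypow /Gm ?phi_cat phi_Y !mx2_mul;
  congr mx2; ring.
Qed.

Lemma phi_blockw bl : exists s, (s = 1 \/ s = -1) /\ phi (blockw bl) = s%:M *m Nbl bl.
Proof.
elim: bl => [|e bl [s [hs IH]]].
  by exists 1; split; [left | rewrite mul1mx phi_nil].
exists (-1 * s); split; first by case: hs => ->; [right | left].
have -> : blockw (e :: bl) = (X ++ ypow e) ++ blockw bl by [].
by rewrite phi_cat IH phi_blk -mulmxA scal_comm scal_scal.
Qed.

Lemma Nbl_inj bl bl' : Nbl bl = Nbl bl' -> bl = bl'.
Proof.
elim: bl bl' => [|e bl IH] [|e' bl'] //=.
- have [a [b [c [d [ha [hb [hc [hd [hdet HN]]]]]]]]] := Nbl_pat bl'.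
  rewrite HN; case: e'; rewrite /= mx2_mul => /mx2_eq [*]; nia.
- have [a [b [c [d [ha [hb [hc [hd [hdet HN]]]]]]]]] := Nbl_pat bl.
  rewrite HN; case: e; rewrite /= mx2_mul => /esym /mx2_eq [*]; nia.
have [a [b [c [d [ha [hb [hc [hd [hdet HN]]]]]]]]] := Nbl_pat bl.
have [a' [b' [c' [d' [ha' [hb' [hc' [hd' [hdet' HN']]]]]]]]] := Nbl_pat bl'.
rewrite HN HN'; case: e; case: e'; rewrite /= !mx2_mul => /mx2_eq [h1 h2 h3 h4];
  try (exfalso; nia).
- congr cons; apply: IH; rewrite HN HN'; congr mx2; lia.
- congr cons; apply: IH; rewrite HN HN'; congr mx2; lia.
Qed.


Lemma core (o o' : option bool) (f f' : bool) (s a b c d s' a' b' c' d' : int) :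
  (s = 1 \/ s = -1) -> (s' = 1 \/ s' = -1) ->
  0 <= a -> 0 <= b -> 0 <= c -> 0 <= d -> a * d - b * c = 1 ->
  0 <= a' -> 0 <= b' -> 0 <= c' -> 0 <= d' -> a' * d' - b' * c' = 1 ->
  mx2 s 0 0 s *m (Ro o *m mx2 a (-b) (-c) d *m Sf f) =
  mx2 s' 0 0 s' *m (Ro o' *m mx2 a' (-b') (-c') d' *m Sf f') ->
  [/\ o = o', f = f', s = s' & mx2 a (-b) (-c) d = mx2 a' (-b') (-c') d'].
Proof.
move=> hs hs' ha hb hc hd hdet ha' hb' hc' hd' hdet'.
have p1 : 0 <= b * c by apply: mulr_ge0.
have p2 : 0 <= b' * c' by apply: mulr_ge0.
have p3 : 1 <= a * d by lia.
have p4 : 1 <= a' * d' by lia.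
have a1 : 1 <= a.
  have [E|//] : a = 0 \/ 1 <= a by lia.
  by move: p3; rewrite E mul0r.
have d1 : 1 <= d.
  have [E|//] : d = 0 \/ 1 <= d by lia.
  by move: p3; rewrite E mulr0.
have a1' : 1 <= a'.
  have [E|//] : a' = 0 \/ 1 <= a' by lia.
  by move: p4; rewrite E mul0r.
have d1' : 1 <= d'.
  have [E|//] : d' = 0 \/ 1 <= d' by lia.
  by move: p4; rewrite E mulr0.
case: o => [[]|]; case: o' => [[]|]; case: f; case: f';
  rewrite /Ro /Sf !mx2_mul => /mx2_eq [h1 h2 h3 h4];
  case: hs => ?; case: hs' => ?; subst s s';
  first [ (split => //; congr mx2; lia) | (exfalso; lia) | (idtac "NIA"; exfalso; nia) ].
Qed.

#[local] Hint Resolve beq_refl : core.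

Lemma phi_nf_rep m p o bl f : exists s a b c d,
  (s = 1 \/ s = -1) /\ 0 <= a /\ 0 <= b /\ 0 <= c /\ 0 <= d /\ a * d - b * c = 1 /\
  Nbl bl = mx2 a (-b) (-c) d /\
  phi (nf m p o bl f) = mx2 s 0 0 s *m (Ro o *m mx2 a (-b) (-c) d *m Sf f).
Proof.
have [a [b [c [d [ha [hb [hc [hd [hdet HN]]]]]]]]] := Nbl_pat bl.
have [s [hs Hb]] := phi_blockw bl.
exists ((if p then -1 else 1) * s), a, b, c, d; do !split => //.
  by case: p; case: hs => ->; [right|left|left|right].
rewrite /nf phi_cat phi_zp /body phi_cat phi_y0w phi_cat Hb phi_fx -HN -mx2_scal.
by rewrite -!mulmxA scal_comm scal_scal !mulmxA.
Qed.

Lemma nf_inj m p o bl f m' p' o' bl' f' :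
  phi (nf m p o bl f) = phi (nf m' p' o' bl' f') ->
  [/\ o = o', bl = bl', f = f' & p = p'].
Proof.
move=> H.
have [s [a [b [c [d [hs [ha [hb [hc [hd [hdet [HN HP]]]]]]]]]]]] := phi_nf_rep m p o bl f.
have [s' [a' [b' [c' [d' [hs' [ha' [hb' [hc' [hd' [hdet' [HN' HP']]]]]]]]]]]] :=
  phi_nf_rep m' p' o' bl' f'.
have [eo ef _ eN] := @core _ _ _ _ _ _ _ _ _ _ _ _ _ _ hs hs' ha hb hc hd hdet ha' hb' hc' hd' hdet'
  (etrans (esym HP) (etrans H HP')).
have ebl : bl = bl' by apply: Nbl_inj; rewrite HN HN'.
subst o' f' bl'; split => //.
move: H; rewrite /nf (phi_cat (zp m p)) (phi_cat (zp m' p')).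
move=> H.
have := congr1 (fun M => M *m phi (winv (body o bl f))) H.
rewrite -!mulmxA phi_winv' !mulmx1 !phi_zp => /matrixP /(_ 0 0).
rewrite !mxE /=; clear -hs; by case: p; case: p'.
Qed.

Arguments nf_inj {m p o bl f m' p' o' bl' f'}.

Lemma eps_nf m p o bl f :
  eps (nf m p o bl f) = 12 * m + (if p then 6 else 0) + eps (body o bl f).
Proof. by rewrite /nf eps_cat eps_zp. Qed.

Lemma faithful v v' : phi v = phi v' -> eps v = eps v' -> braid_eq v v'.
Proof.
have [m [p [o [bl [f Hv]]]]] := nf_exists v.
have [m' [p' [o' [bl' [f' Hv']]]]] := nf_exists v'.
have [P1 E1] := braid_inv _ _ Hv.
have [P2 E2] := braid_inv _ _ Hv'.
move=> HP HE.
have [eo ebl ef ep] := nf_inj (etrans (esym P1) (etrans HP P2)).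
subst o' bl' f' p'.
have em : m = m'.
  move: HE; rewrite E1 E2 !eps_nf; lia.
subst m'.
rewrite Hv; symmetry; exact: Hv'.
Qed.

Lemma phi_eps v v' : phi v = phi v' -> exists k, eps v' = eps v + 12 * k.
Proof.
have [m [p [o [bl [f Hv]]]]] := nf_exists v.
have [m' [p' [o' [bl' [f' Hv']]]]] := nf_exists v'.
have [P1 E1] := braid_inv _ _ Hv.
have [P2 E2] := braid_inv _ _ Hv'.
move=> HP.
have [eo ebl ef ep] := nf_inj (etrans (esym P1) (etrans HP P2)).
subst o' bl' f' p'.
exists (m' - m); rewrite E1 E2 !eps_nf; ring.
Qed.

Lemma phi_un n : phi (nseq n s1) = mx2 1 n%:Z 0 1.
Proof.
elim: n => [|n IH]; first exact: phi_nil.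
rewrite /= -/(phi _) IH mx2_mul; congr mx2; rewrite ?intS; ring.
Qed.
Lemma phi_un' n : phi (nseq n s1') = mx2 1 (- n%:Z) 0 1.
Proof.
elim: n => [|n IH]; first by rewrite oppr0; exact: phi_nil.
rewrite /= -/(phi _) IH mx2_mul; congr mx2; rewrite ?intS; ring.
Qed.
Definition uk (k : int) : word :=
  match k with Posz n => nseq n s1 | Negz n => nseq n.+1 s1' end.
Lemma phi_uk k : phi (uk k) = mx2 1 k 0 1.
Proof. case: k => n; first exact: phi_un. by rewrite /uk phi_un' NegzE. Qed.

Lemma unit_int (a d : int) : a * d = 1 -> (a = 1 /\ d = 1) \/ (a = -1 /\ d = -1).
Proof.
move=> H.
have ud := intUnitRing.unitzPl H.
have ua : a \is a intUnitRing.unitz by apply: (@intUnitRing.unitzPl _ d); rewrite mulrC.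
move: ua ud; rewrite !qualifE /= => /orP [] /eqP ha /orP [] /eqP hd; subst; 
  rewrite ?mulr1 ?mulrN1 ?opprK in H *; auto; exfalso; move: H; by [].
Qed.

Lemma surj_aux (N : nat) a b c d : (`|c| <= N)%N -> a * d - b * c = 1 ->
  exists w, phi w = mx2 a b c d.
Proof.
elim: N a b c d => [|N IH] a b c d hc hdet.
  have c0 : c = 0 by lia.
  subst c.
  have [[-> ->]|[-> ->]] : (a = 1 /\ d = 1) \/ (a = -1 /\ d = -1) by apply: unit_int; lia.
    by exists (uk b); rewrite phi_uk.
  exists (Z ++ uk (- b)); rewrite phi_cat phi_Z phi_uk mx2_mul; congr mx2; ring.
have [c0|cn0] := eqVneq c 0.
  subst c. have [[-> ->]|[-> ->]] : (a = 1 /\ d = 1) \/ (a = -1 /\ d = -1) by apply: unit_int; lia.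
    by exists (uk b); rewrite phi_uk.
  exists (Z ++ uk (- b)); rewrite phi_cat phi_Z phi_uk mx2_mul; congr mx2; ring.
set q := (a %/ c)%Z; set r := (a %% c)%Z.
have ha : a = q * c + r by rewrite /q /r -divz_eq.
have hr0 : 0 <= r by rewrite /r modz_ge0.
have hr1 : r < `|c| by rewrite /r ltz_mod.
have [w2 H2] := IH c d (- r) (- (b - q * d)) ltac:(lia) ltac:(nia).
exists (uk q ++ X ++ X ++ X ++ w2).
rewrite !phi_cat phi_uk phi_X H2 !mx2_mul; congr mx2; nia.
Qed.

Lemma phi_surj a b c d : a * d - b * c = 1 -> exists w, phi w = mx2 a b c d.
Proof. exact: (@surj_aux `|c|%N). Qed.

Lemma phi_det w : exists a b c d, phi w = mx2 a b c d /\ a * d - b * c = 1.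
Proof.
elim: w => [|l w [a [b [c [d [H hd]]]]]].
  by exists 1, 0, 0, 1; rewrite phi_nil.
rewrite phi_cons H; case: l => [[] []] /=; rewrite mx2_mul;
  eexists; eexists; eexists; eexists; split; try reflexivity; nia.
Qed.

Definition fM (M : 'M[int]_2) : qform := (M 1 0, M 1 1 - M 0 0, - M 0 1).

Lemma fM_mx2 a b c d : fM (mx2 a b c d) = (c, d - a, - b).
Proof. by rewrite /fM !mx2E. Qed.

Lemma qform_eq (f g : qform) : qa f = qa g -> qb f = qb g -> qc f = qc g -> f = g.
Proof. by case: f => [[a b] c]; case: g => [[a' b'] c']; rewrite /qa /qb /qc /= => -> -> ->. Qed.

Lemma disc_qact al be ga de f :
  disc (qact al be ga de f) = (al * de - be * ga) ^+ 2 * disc f.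
Proof. by case: f => [[a b] c]; rewrite /disc /qact /qa /qb /qc /=; ring. Qed.

Lemma qact_comp al be ga de al' be' ga' de' f :
  qact al be ga de (qact al' be' ga' de' f) =
  qact (al' * al + be' * ga) (al' * be + be' * de) (ga' * al + de' * ga)
       (ga' * be + de' * de) f.
Proof.
case: f => [[a b] c]; rewrite /qact /qa /qb /qc /=.
congr (_, _, _); ring.
Qed.

Lemma qact_id f : qact 1 0 0 1 f = f.
Proof.
case: f => [[a b] c]; rewrite /qact /qa /qb /qc /=.
congr (_, _, _); ring.
Qed.

Lemma feq_refl f : form_equiv f f.
Proof. by exists 1, 0, 0, 1; split; [ring | exact: qact_id]. Qed.

Lemma feq_sym f g : form_equiv f g -> form_equiv g f.
Proof.
move=> [al [be [ga [de [hd <-]]]]].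
exists de, (- be), (- ga), al; split; first by rewrite -hd; ring.
rewrite qact_comp.
have -> : al * de + be * - ga = 1 by rewrite -hd; ring.
have -> : al * - be + be * al = 0 by ring.
have -> : ga * de + de * - ga = 0 by ring.
have -> : ga * - be + de * al = 1 by rewrite -hd; ring.
exact: qact_id.
Qed.

Lemma feq_trans f g h : form_equiv f g -> form_equiv g h -> form_equiv f h.
Proof.
move=> [al [be [ga [de [hd <-]]]]] [al' [be' [ga' [de' [hd' <-]]]]].
rewrite qact_comp; do 4 eexists; split; last reflexivity.
have -> : (al * al' + be * ga') * (ga * be' + de * de') -
   (al * be' + be * de') * (ga * al' + de * ga') =
   (al * de - be * ga) * (al' * de' - be' * ga') by ring.
by rewrite hd hd' mulr1.
Qed.

Lemma fM_conj al be ga de (M : 'M[int]_2) : al * de - be * ga = 1 ->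
  fM (mx2 de (- be) (- ga) al *m M *m mx2 al be ga de) = qact al be ga de (fM M).
Proof.
move=> _; rewrite (mx2_eta M) !mx2_mul !fM_mx2 /qact /qa /qb /qc /=.
congr (_, _, _); ring.
Qed.

Lemma fM_inj (M M' : 'M[int]_2) : \tr M = \tr M' -> fM M = fM M' -> M = M'.
Proof.
rewrite (mx2_eta M) (mx2_eta M') !mx2_tr !fM_mx2 => ht [h1 h2 h3].
congr mx2; lia.
Qed.

Lemma disc_fM a b c d : disc (fM (mx2 a b c d)) = (a + d) ^+ 2 - 4 * (a * d - b * c).
Proof. by rewrite fM_mx2 /disc /qa /qb /qc /=; ring. Qed.

Lemma nonsq_pos (t b : int) : 0 <= t -> 0 <= b -> b * b = t * t - 4 -> t = 2.
Proof.
move=> ht hb H.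
have htb : b < t by nia.
have hb1 : b <= 1 by nia.
have [h|h] : t <= 2 \/ 3 <= t by lia.
  have [E|E] : t = 2 \/ t <= 1 by lia. by []. nia.
exfalso; nia.
Qed.
Lemma nonsq (t b : int) : t != 2 -> t != -2 -> b ^+ 2 != t ^+ 2 - 4.
Proof.
move=> h1 h2; apply/eqP => H.
have [ht|ht] : 0 <= t \/ t <= 0 by lia.
all: have [hb|hb] : 0 <= b \/ b <= 0 by lia.
- move/eqP: h1; apply; apply: (@nonsq_pos t b) => //; rewrite !expr2 in H; lia.
- move/eqP: h1; apply; apply: (@nonsq_pos t (-b)) => //; rewrite !expr2 in H; lia.
- move/eqP: h2; apply; rewrite -[t]opprK; congr (- _); apply: (@nonsq_pos (-t) b) => //; rewrite !expr2 in H; lia.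
- move/eqP: h2; apply; rewrite -[t]opprK; congr (- _); apply: (@nonsq_pos (-t) (-b)) => //; rewrite !expr2 in H; lia.
Qed.

Lemma qa_nz t f : t != 2 -> t != -2 -> disc f = t ^+ 2 - 4 -> qa f != 0.
Proof.
move=> h1 h2 hD; apply/eqP => ha.
have := @nonsq t (qb f) h1 h2; rewrite -hD /disc ha; apply/negP; rewrite negbK.
by apply/eqP; ring.
Qed.

Lemma transl (a b : int) : a != 0 -> exists k, `|b + 2 * a * k| <= `|a|.
Proof.
move=> ha.
have h2a : 2 * a != 0 by lia.
set q := (b %/ (2 * a))%Z; set r := (b %% (2 * a))%Z.
have hb : b = q * (2 * a) + r by rewrite /q /r -divz_eq.
have hr0 : 0 <= r by rewrite /r modz_ge0.
have hr1 : r < `|2 * a| by rewrite /r ltz_mod.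
have [hr|hr] : r <= `|a| \/ `|a| < r by lia.
  by exists (- q); lia.
have [hp|hn] : 0 < a \/ a < 0 by lia.
  by exists (- q - 1); lia.
by exists (- q + 1); lia.
Qed.

Lemma reduce (t : int) (N : nat) f : t != 2 -> t != -2 -> disc f = t ^+ 2 - 4 ->
  (absz (qa f) <= N)%N -> exists g, form_equiv f g /\ disc g = t ^+ 2 - 4 /\
  `|qb g| <= `|qa g| /\ `|qa g| <= `|qc g|.
Proof.
move=> h1 h2; elim: N f => [|N IH] f hD hN.
  by have := @qa_nz _ _ h1 h2 hD; lia.
have ha := @qa_nz _ _ h1 h2 hD.
have [k hk] := @transl _ (qb f) ha.
set g1 := qact 1 k 0 1 f.
have e1 : form_equiv f g1 by exists 1, k, 0, 1; split => //; ring.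
have d1 : disc g1 = t ^+ 2 - 4 by rewrite disc_qact hD; ring.
have hA : qa g1 = qa f by rewrite /g1 /qact /qa /=; ring.
have hB : qb g1 = qb f + 2 * qa f * k by rewrite /g1 /qact /qb /qa /=; ring.
have [hc|hc] : `|qa g1| <= `|qc g1| \/ `|qc g1| < `|qa g1| by lia.
  by exists g1; do !split => //; rewrite hA hB.
set g2 := qact 0 1 (-1) 0 g1.
have e2 : form_equiv g1 g2 by exists 0, 1, (-1), 0; split => //; ring.
have d2 : disc g2 = t ^+ 2 - 4 by rewrite disc_qact d1; ring.
have hA2 : qa g2 = qc g1 by rewrite /g2 /qact /qa /qc /=; ring.
have [g [e3 H]] := IH g2 d2 ltac:(rewrite hA2; lia).
exists g; split => //; exact: (feq_trans _ _ _ e1 (feq_trans _ _ _ e2 e3)).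
Qed.

Lemma bounded (D a b c : int) : D != 0 -> b ^+ 2 - 4 * a * c = D ->
  `|b| <= `|a| -> `|a| <= `|c| ->
  `|a| <= `|D| /\ `|b| <= `|D| /\ `|c| <= `|D|.
Proof.
move=> hD H hba hac.
have ha : a != 0.
  apply/eqP => a0; subst a; have b0 : b = 0 by lia.
  by subst b; move: hD; rewrite -H; apply/negP; rewrite negbK; apply/eqP; ring.
rewrite expr2 in H.
have [sa|sa] : 0 < a \/ a < 0 by lia.
all: have [sb|sb] : 0 <= b \/ b < 0 by lia.
all: have [sc|sc] : 0 <= c \/ c < 0 by lia.
all: have [sD|sD] : 0 <= D \/ D < 0 by lia.
all: nia.
Qed.

Lemma even_tb (t a b c : int) : b ^+ 2 - 4 * a * c = t ^+ 2 - 4 -> exists a0, t - b = 2 * a0.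
Proof.
move=> H.
set q := ((t - b) %/ 2)%Z; set r := ((t - b) %% 2)%Z.
have hb : t - b = q * 2 + r by rewrite /q /r -divz_eq.
have hr0 : 0 <= r by rewrite /r modz_ge0.
have hr1 : r < 2 by have h := @ltz_mod (t - b) 2 isT; rewrite /r; lia.
have [r0|r1] : r = 0 \/ r = 1 by lia.
  by exists q; lia.
exfalso; rewrite !expr2 in H; nia.
Qed.

Lemma Mof_ex t f : disc f = t ^+ 2 - 4 -> exists a0 b0 c0 d0,
  fM (mx2 a0 b0 c0 d0) = f /\ a0 + d0 = t /\ a0 * d0 - b0 * c0 = 1.
Proof.
case: f => [[a b] c]; rewrite /disc /qa /qb /qc /= => H.
have [a0 h0] := @even_tb _ _ _ _ H.
exists a0, (- c), a, (t - a0); rewrite fM_mx2; split; first by congr (_, _, _); lia.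
split; first ring.
rewrite !expr2 in H; nia.
Qed.

Section Extract.
Variables (T : eqType) (P : T -> Prop) (R : T -> T -> Prop) (x0 : T).
Hypothesis Rrefl : forall x, R x x.
Hypothesis Rsym : forall x y, R x y -> R y x.
Hypothesis Rtrans : forall x y z, R x y -> R y z -> R x z.

Lemma extract (S : seq T) : exists L : seq T,
  (forall i, (i < size L)%N -> P (nth x0 L i)) /\
  (forall i j, (i < size L)%N -> (j < size L)%N -> R (nth x0 L i) (nth x0 L j) -> i = j) /\
  (forall y, y \in S -> P y -> exists i, (i < size L)%N /\ R y (nth x0 L i)).
Proof.
elim: S => [|y S [L [HP [HI HS]]]].
  by exists [::]; split => // i.
have [[Py Hn]|Hc] := Classical_Prop.classic (P y /\ ~ exists i, (i < size L)%N /\ R y (nth x0 L i)).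
  exists (rcons L y); rewrite size_rcons; split; last split.
  - move=> i hi; rewrite nth_rcons.
    case: ltnP => hi'; first exact: HP.
    have -> : i = size L by lia.
    by rewrite eqxx.
  - move=> i j hi hj; rewrite !nth_rcons.
    case: (ltnP i (size L)) => hi'; case: (ltnP j (size L)) => hj'.
    + exact: HI.
    + have -> : j = size L by lia. rewrite eqxx => Hr.
      by exfalso; apply: Hn; exists i; split => //; apply: Rsym.
    + have -> : i = size L by lia. rewrite eqxx => Hr.
      by exfalso; apply: Hn; exists j.
    + lia.
  - move=> z; rewrite in_cons => /orP [/eqP ->|hz] Pz.
      by exists (size L); rewrite nth_rcons ltnn eqxx; split.
    have [i [hi Hr]] := HS z hz Pz.
    by exists i; rewrite nth_rcons hi; split => //; lia.
exists L; split => //; split => //.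
move=> z; rewrite in_cons => /orP [/eqP ->|hz] Pz; last exact: HS.
apply: Classical_Prop.NNPP => Hne; apply: Hc; split => // Hex; apply: Hne.
Qed.
End Extract.

Lemma inv_mx2 (A : 'M[int]_2) al be ga de : al * de - be * ga = 1 ->
  A *m mx2 al be ga de = 1%:M -> A = mx2 de (- be) (- ga) al.
Proof.
move=> hd HA.
have E : mx2 al be ga de *m mx2 de (- be) (- ga) al = 1%:M.
  by rewrite mx2_mul mx2_1; congr mx2; lia.
by rewrite -[A]mulmx1 -E mulmxA HA mul1mx.
Qed.

Lemma conj_forms u v : braid_conj u v -> form_equiv (fM (phi u)) (fM (phi v)).
Proof.
move=> [c Hc].
have [P1 _] := braid_inv _ _ Hc.
have [al [be [ga [de [HP hd]]]]] := phi_det (winv c).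
have Hc' := @inv_mx2 _ _ _ _ _ hd (etrans (congr1 _ (esym HP)) (phi_winv' c)).
exists al, be, ga, de; split => //.
by rewrite -P1 !phi_cat Hc' HP mulmxA (@fM_conj _ _ _ _ _ hd).
Qed.

Lemma conj_back w (M : 'M[int]_2) : form_equiv (fM (phi w)) (fM M) ->
  \tr M = \tr (phi w) -> exists u, phi (winv u ++ w ++ u) = M.
Proof.
move=> [al [be [ga [de [hd Hq]]]]] Ht.
have [u Hu] := @phi_surj _ _ _ _ hd.
have Hi := @inv_mx2 _ _ _ _ _ hd (etrans (congr1 _ (esym Hu)) (phi_winv u)).
exists u; rewrite !phi_cat Hi Hu mulmxA.
apply: fM_inj; last by rewrite (@fM_conj _ _ _ _ _ hd).
rewrite Ht (mx2_eta (phi w)) !mx2_mul !mx2_tr.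
set a := phi w 0 0; set b := phi w 0 1; set c := phi w 1 0; set d := phi w 1 1.
transitivity ((al * de - be * ga) * (a + d)); first ring.
by rewrite hd mul1r.
Qed.

Lemma box_ord (z : int) (N : nat) : `|z| <= N%:Z ->
  exists i : 'I_(2 * N + 1), (i : nat)%:Z - N%:Z = z.
Proof.
move=> hz.
have h : (absz (z + N%:Z)%R < 2 * N + 1)%N by lia.
by exists (Ordinal h) => /=; lia.
Qed.

Lemma fchoice (Q : nat -> word -> Prop) (h : nat) :
  (forall i, (i < h)%N -> exists w, Q i w) ->
  exists W : nat -> word, forall i, (i < h)%N -> Q i (W i).
Proof.
elim: h => [|h IH] H; first by exists (fun _ => [::]).
have [W HW] := IH (fun i hi => H i (ltnW hi)).
have [w Hw] := H h (ltnSn h).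
exists (fun i => if i == h then w else W i) => i hi.
case: eqP => [->|ne] //; apply: HW; lia.
Qed.

Definition epj (n : int) (j : nat) (x : int) : bool := x == n + j%:Z.

Lemma count_split (n : int) (g : nat -> int) (s : seq nat) :
  (forall i, i \in s -> n <= g i < n + 12) ->
  (\sum_(j < 12) size [seq i <- s | epj n j (g i)])%N = size s.
Proof.
elim: s => [|x s IH] H.
  by rewrite big1.
rewrite /= -[RHS]add1n -(IH (fun i hi => H i (@mem_behead _ (x :: s) i hi))).
have -> : (\sum_(j < 12) size (if epj n j (g x) then x :: [seq i <- s | epj n j (g i)]
      else [seq i <- s | epj n j (g i)]))%N =
   (\sum_(j < 12) (epj n j (g x) + size [seq i <- s | epj n j (g i)]))%N.
  by apply: eq_bigr => j _; case: (epj n j (g x)).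
rewrite big_split /=; congr (_ + _)%N.
have hx := H x (mem_head x s).
have hj : (absz (g x - n)%R < 12)%N by lia.
rewrite (bigD1 (Ordinal hj)) //= big1 ?addn0.
  by rewrite /epj (_ : g x == _) //; apply/eqP; lia.
move=> j hne; rewrite /epj; case: eqP => // E; exfalso; move/eqP: hne; apply; apply: val_inj => /=; lia.
Qed.

Theorem lemma3p1 (t n : int) :
  t != 2 -> t != -2 ->
  exists k : 'I_12 -> nat,
    (forall j : 'I_12,
        num_classes (Xpred t (n + (j : nat)%:Z)) braid_conj (k j)) /\
    num_classes (fun f : qform => disc f = t ^+ 2 - 4) form_equiv
      (\sum_(j < 12) k j)%N.
Proof.
move=> h1 h2.
set D := t ^+ 2 - 4.
have hD0 : D != 0.
  by have := @nonsq t 0 h1 h2; rewrite expr0n /= /D; apply: contra => /eqP ->.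
set N := absz D.
set K := (2 * N + 1)%N.
pose cf (p : 'I_K * 'I_K * 'I_K) : qform :=
  ((p.1.1 : nat)%:Z - N%:Z, (p.1.2 : nat)%:Z - N%:Z, (p.2 : nat)%:Z - N%:Z).
pose S := codom cf.
have cover : forall x, disc x = D -> exists y, y \in S /\ disc y = D /\ form_equiv x y.
  move=> x hx.
  have [g [e [dg [hb ha]]]] := @reduce t (absz (qa x)) x h1 h2 hx (leqnn _).
  have hN : `|D| = N%:Z by rewrite /N abszE.
  have [ba [bb bc]] := @bounded D (qa g) (qb g) (qc g) hD0 dg hb ha.
  rewrite hN in ba bb bc.
  have [i1 E1] := @box_ord _ _ ba.
  have [i2 E2] := @box_ord _ _ bb.
  have [i3 E3] := @box_ord _ _ bc.
  exists g; split => //.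
  have -> : g = cf (i1, i2, i3).
    by move: E1 E2 E3; clear; case: g => [[a b] c]; rewrite /qa /qb /qc /cf /= => -> -> ->.
  exact: codom_f.
have [L [HP [HI HS]]] := @extract _ (fun f : qform => disc f = D) form_equiv (0, 0, 0)
  feq_refl feq_sym S.
set x0 : qform := (0, 0, 0).
set h := size L.
have fsurj : forall x, disc x = D -> exists i, (i < h)%N /\ form_equiv x (nth x0 L i).
  move=> x hx.
  have [y [yS [dy ey]]] := cover x hx.
  have [i [hi Hr]] := HS y yS dy.
  by exists i; split => //; exact: (feq_trans _ _ _ ey Hr).
have [W HW] : exists W : nat -> word, forall i, (i < h)%N ->
    fM (phi (W i)) = nth x0 L i /\ \tr (phi (W i)) = t /\ n <= eps (W i) < n + 12.
  apply: (@fchoice (fun i w => fM (phi w) = nth x0 L i /\ \tr (phi w) = t /\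
    n <= eps w < n + 12) h) => i hi.
  have [a0 [b0 [c0 [d0 [Hf [Ht Hd]]]]]] := @Mof_ex t _ (HP i hi).
  have [w Hw] := @phi_surj _ _ _ _ Hd.
  set k := - ((eps w - n) %/ 12)%Z.
  exists (w ++ z4pow k); split; last split.
  - by rewrite phi_cat phi_z4pow -mx2_1 mulmx1 Hw.
  - by rewrite phi_cat phi_z4pow -mx2_1 mulmx1 Hw mx2_tr.
  - rewrite eps_cat eps_z4pow /k.
    have := divz_eq (eps w - n) 12.
    have := @modz_ge0 (eps w - n) 12 isT.
    have := @ltz_mod (eps w - n) 12 isT.
    move: (((eps w - n) %/ 12)%Z) (((eps w - n) %% 12)%Z) => q r.
    lia.
pose A (j : nat) := [seq i <- iota 0 h | epj n j (eps (W i))].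
have Auniq : forall j, uniq (A j) by move=> j; apply: filter_uniq; exact: iota_uniq.
have Amem : forall j i, (i \in A j) = (i < h)%N && (eps (W i) == n + j%:Z).
  move=> j i; rewrite mem_filter mem_iota /epj add0n andbC; by [].
exists (fun j : 'I_12 => size (A j)); split.
  move=> j.
  exists (fun x : 'I_(size (A j)) => W (nth 0%N (A j) x)); split; last split.
  - move=> x.
    have := mem_nth 0%N (ltn_ord x); rewrite Amem => /andP [hi /eqP he].
    by have [_ [Ht _]] := HW _ hi; split.
  - move=> x y Hc.
    have := mem_nth 0%N (ltn_ord x); rewrite Amem => /andP [hx _].
    have := mem_nth 0%N (ltn_ord y); rewrite Amem => /andP [hy _].
    have := conj_forms _ _ Hc.
    rewrite (HW _ hx).1 (HW _ hy).1 => Hf.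
    have Heq := HI _ _ hx hy Hf.
    apply: val_inj; apply/eqP.
    by rewrite -(nth_uniq 0%N (ltn_ord x) (ltn_ord y) (Auniq j)) Heq.
  - move=> w [ht he].
    have [a [b [c [d [Hp hd]]]]] := phi_det w.
    have dw : disc (fM (phi w)) = D.
      move: ht; rewrite Hp disc_fM mx2_tr => ->; rewrite hd /D; ring.
    have [i [hi Hr]] := fsurj _ dw.
    have [Wf [Wt We]] := HW i hi.
    have e1 : form_equiv (fM (phi w)) (fM (phi (W i))) by rewrite Wf.
    have e2 : \tr (phi (W i)) = \tr (phi w) by rewrite Wt ht.
    have [u Hu] := @conj_back _ _ e1 e2.
    have [k Hk] := phi_eps _ _ Hu.
    have ew : eps (winv u ++ w ++ u) = eps w.
      by rewrite !eps_cat eps_winv; ring.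
    have ei : eps (W i) = n + (j : nat)%:Z.
      rewrite Hk ew he; rewrite Hk ew he in We.
      have hj := ltn_ord j.
      have : k = 0 by lia.
      by move=> ->; rewrite mulr0 addr0.
    have Hb := faithful _ _ Hu (etrans ew (etrans he (esym ei))).
    have hiA : i \in A j by rewrite Amem hi ei eqxx.
    have hidx : (index i (A j) < size (A j))%N by rewrite index_mem.
    exists (Ordinal hidx).
    rewrite /= nth_index //.
    exists (winv u); rewrite winvK; exact: Hb.
have Hsum : (\sum_(j < 12) size (A j))%N = h.
  have := @count_split n (fun i => eps (W i)) (iota 0 h).
  rewrite size_iota; apply => i; rewrite mem_iota add0n => /andP [_ hi].
  by have [_ [_ H]] := HW i hi.
rewrite Hsum.
exists (fun i : 'I_h => nth x0 L i); split; last split.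
- by move=> i; exact: HP (ltn_ord i).
- by move=> i j Hr; apply: val_inj; exact: HI _ _ (ltn_ord i) (ltn_ord j) Hr.
- by move=> x hx; have [i [hi Hr]] := fsurj x hx; exists (Ordinal hi).
Qed.
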